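(* Let $x\ge 0$ and $y$ be integers with $M(x,y)\neq\emptyset$, let $G_0$ be a minimal graph in $M(x,y)$, let $A\neq\emptyset$ be an independent set of vertices of $G_0$, and let $G_0'=G_0-A$. Then (a) $\chi(G_0')=\chi(G_0)-1$; (b) $\mathrm{cl}(G_0')=\mathrm{cl}(G_0)$; (c) $|V(G_0)|=\chi(G_0)+2f(G_0)-x-1$.
   Context: All graphs are finite, simple and undirected; the empty graph is allowed, with $\chi=\mathrm{cl}=0$. $\mathrm{cl}(G)$ is the clique number, $\chi(G)$ the chromatic number, and $f(G)=\chi(G)-\mathrm{cl}(G)$. For integers $x,y$, $M(x,y)=\{G: |V(G)|<\chi(G)+2f(G)-x \text{ and } f(G)\le y\}$. A graph $G_0$ in a nonempty set $\mathcal M$ of graphs is minimal in $\mathcal M$ if $|V(G_0)|=\min\{|V(G)|:G\in\mathcal M\}$. *)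

(* Defs.v *)
From HB Require Import structures.
From mathcomp Require Import all_boot all_order all_algebra.
Set Implicit Arguments. Unset Strict Implicit. Unset Printing Implicit Defensive.
Import Order.TTheory GRing.Theory Num.Theory.

Section Graphs.
Variables (T : finType) (e : rel T).

Definition simple_graph : Prop := symmetric e /\ irreflexive e.

(* proper k-colouring (loops are ignored, irrelevant for simple graphs) *)
Definition colorable (k : nat) : bool :=
  [exists c : {ffun T -> 'I_k},
     [forall x, forall y, (e x y && (x != y)) ==> (c x != c y)]].

Lemma colorable_exists : exists k, colorable k.
Proof.
exists #|T|; apply/existsP; exists [ffun x => enum_rank x].
apply/forallP => x; apply/forallP => y; apply/implyP => /andP [_ nxy].
by rewrite !ffunE; apply: contra nxy => /eqP /enum_rank_inj ->.
Qed.

Definition chi : nat := ex_minn colorable_exists.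

Definition is_clique (K : {set T}) : bool :=
  [forall x in K, forall y in K, (x != y) ==> e x y].

Definition cl : nat := \max_(K : {set T} | is_clique K) #|K|.

Definition f_gap : int := (chi%:Z - cl%:Z)%R.

Definition is_independent (A : {set T}) : bool :=
  [forall u in A, forall v in A, ~~ e u v].

Definition inM (x y : int) : bool :=
  ((#|T|%:Z < chi%:Z + 2%:Z * f_gap - x) && (f_gap <= y))%R.

End Graphs.

Definition del_vert (T : finType) (A : {set T}) : finType :=
  {x : T | x \notin A}.
Definition del_rel (T : finType) (e : rel T) (A : {set T}) : rel (del_vert A) :=
  fun u v => e (val u) (val v).
Arguments del_rel [T] e A.

(* Main.v *)
Require Import Defs.
From HB Require Import structures.
From mathcomp Require Import all_boot all_order all_algebra.
From Stdlib Require Import Lia.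
Import Order.TTheory GRing.Theory Num.Theory.
Set Implicit Arguments. Unset Strict Implicit. Unset Printing Implicit Defensive.

Ltac nl := repeat match goal with
  | H : is_true (_ <= _)%N |- _ => move/ssrnat.leP: H => H
  | H : is_true (_ < _)%N |- _ => move/ssrnat.ltP: H => H
  | |- is_true (_ <= _)%N => apply/ssrnat.leP
  | |- is_true (_ < _)%N => apply/ssrnat.ltP
  end;
  try unfold addn in *; try unfold subn in *; try unfold muln in *;
  try unfold predn in *;
  repeat match goal with H : is_true _ |- _ => clear H end; lia.

Lemma chi_min (T : finType) (e : rel T) k : colorable e k -> (chi e <= k)%N.
Proof. rewrite /chi; case: ex_minnP => m _ H; exact: H. Qed.

Lemma chi_col (T : finType) (e : rel T) : colorable e (chi e).
Proof. rewrite /chi; by case: ex_minnP. Qed.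

Lemma cl_max (T : finType) (e : rel T) K : is_clique e K -> (#|K| <= cl e)%N.
Proof. move=> HK; rewrite /cl; exact: (@leq_bigmax_cond _ (is_clique e) (fun K : {set T} => #|K|) K HK). Qed.

Lemma chi_hom (T1 T2 : finType) (e1 : rel T1) (e2 : rel T2) (h : T1 -> T2) :
  (forall u v, e1 u v -> u != v -> e2 (h u) (h v) && (h u != h v)) ->
  (chi e1 <= chi e2)%N.
Proof.
move=> Hh; apply: chi_min; have := chi_col e2; case/existsP => c /forallP H.
apply/existsP; exists [ffun u => c (h u)]; apply/forallP => u; apply/forallP => v.
apply/implyP => /andP [euv nuv]; rewrite !ffunE.
case/andP: (Hh u v euv nuv) => e' n'.
by have := forallP (H (h u)) (h v); rewrite e' n'.
Qed.

Lemma cl_hom (T1 T2 : finType) (e1 : rel T1) (e2 : rel T2) (h : T1 -> T2) :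
  injective h -> (forall u v, e1 u v -> e2 (h u) (h v)) ->
  (cl e1 <= cl e2)%N.
Proof.
move=> hinj Hh; apply/bigmax_leqP => K HK.
rewrite -(card_imset K hinj); apply: cl_max.
apply/forallP => a; apply/implyP => /imsetP [u uK ->].
apply/forallP => b; apply/implyP => /imsetP [v vK ->].
apply/implyP => nuv; apply: Hh.
have nuv' : u != v by apply: contra nuv => /eqP ->.
have := forallP HK u; rewrite uK /= => /forallP /(_ v); rewrite vK nuv'; done.
Qed.

Lemma simple_del (T : finType) (e : rel T) (A : {set T}) :
  simple_graph e -> simple_graph (del_rel e A).
Proof.
case=> hs hi; split.
- move=> u v; exact: hs.
- move=> u; exact: hi.
Qed.

Lemma card_del (T : finType) (A : {set T}) : #|del_vert A| = (#|T| - #|A|)%N.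
Proof.
rewrite /del_vert card_sig -(cardC A).
have -> : #|[pred x | x \notin A]| = #|[predC A]| by apply: eq_card.
by rewrite addKn.
Qed.

Lemma chi_val (T : finType) (e : rel T) (A : {set T}) :
  (chi (del_rel e A) <= chi e)%N.
Proof. apply: (chi_hom (h := val)) => u v euv nuv; apply/andP; split => //. Qed.

Lemma cl_val (T : finType) (e : rel T) (A : {set T}) :
  (cl (del_rel e A) <= cl e)%N.
Proof. apply: (cl_hom (h := val)) => //; exact: val_inj. Qed.

Definition incl_map (T : finType) (A B : {set T}) (sBA : B \subset A)
  (u : del_vert A) : del_vert B :=
  exist (fun x => x \notin B) (val u) (contra (subsetP sBA (val u)) (valP u)).

Lemma chi_incl (T : finType) (e : rel T) (A B : {set T}) (sBA : B \subset A) :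
  (chi (del_rel e A) <= chi (del_rel e B))%N.
Proof.
apply: (chi_hom (h := incl_map sBA)) => u v euv nuv; apply/andP; split.
- exact: euv.
- by rewrite -val_eqE /=.
Qed.

Lemma cl_incl (T : finType) (e : rel T) (A B : {set T}) (sBA : B \subset A) :
  (cl (del_rel e A) <= cl (del_rel e B))%N.
Proof.
apply: (cl_hom (h := incl_map sBA)) => //.
move=> u v /(congr1 val) /= H; exact: val_inj.
Qed.

Lemma chi_del_up (T : finType) (e : rel T) (A : {set T}) :
  is_independent e A -> (chi e <= (chi (del_rel e A)).+1)%N.
Proof.
move=> hA; set k := chi (del_rel e A).
apply: chi_min; have := chi_col (del_rel e A); case/existsP => c /forallP H.
apply/existsP.
exists [ffun v => if (insub v : option (del_vert A)) is Some u
                  then widen_ord (leqnSn k) (c u) else ord_max].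
apply/forallP => a; apply/forallP => b; apply/implyP => /andP [eab nab].
rewrite !ffunE.
case: insubP => [u Pu vu|nPu]; case: insubP => [w Pw vw|nPw].
- rewrite -val_eqE /= val_eqE.
  have := forallP (H u) w; rewrite /del_rel vu vw eab /=.
  have -> : u != w by apply: contra nab => /eqP uw; by rewrite -vu -vw uw.
  done.
- by rewrite -val_eqE /= ltn_eqF.
- by rewrite -val_eqE /= eq_sym ltn_eqF.
- move: nPu nPw; rewrite !negbK => aA bA.
  have := forallP hA a; rewrite aA /= => /forallP /(_ b); rewrite bA eab.
  done.
Qed.

Lemma cl_del_up (T : finType) (e : rel T) (A : {set T}) :
  is_independent e A -> (cl e <= (cl (del_rel e A)).+1)%N.
Proof.
move=> hA; apply/bigmax_leqP => K HK.
rewrite -(cardsID A K).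
have h1 : (#|K :&: A| <= 1)%N.
  apply/card_le1_eqP => a b; rewrite !inE => /andP [aK aA] /andP [bK bA].
  apply/eqP; case: (boolP (b == a)) => // nab.
  have := forallP HK a; rewrite aK /= => /forallP /(_ b); rewrite bK eq_sym nab /= => eab.
  have := forallP hA a; rewrite aA /= => /forallP /(_ b); rewrite bA eab.
  done.
set K' := [set u : del_vert A | val u \in K].
have -> : K :\: A = val @: K'.
  apply/setP => v; rewrite !inE. apply/andP/imsetP.
  - case=> vA vK; exists (Sub v vA); by rewrite ?inE ?SubK.
  - case=> u; rewrite inE => uK ->; split => //; exact: (valP u).
rewrite card_imset; last exact: val_inj.
have : (#|K'| <= cl (del_rel e A))%N.
  apply: cl_max; apply/forallP => u; apply/implyP; rewrite inE => uK.
  apply/forallP => w; apply/implyP; rewrite inE => wK; apply/implyP => nuw.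
  have := forallP HK (val u); rewrite uK /= => /forallP /(_ (val w)).
  by rewrite wK val_eqE nuw.
move=> h2; rewrite addnC -addn1 leq_add //.
Qed.

Lemma chi_class (T : finType) (e : rel T) k (c : {ffun T -> 'I_k}) (a : T) :
  [forall x, forall y, (e x y && (x != y)) ==> (c x != c y)] ->
  (chi (del_rel e [set v | c v == c a]) <= k.-1)%N.
Proof.
case: k c a => [|[|k]] c a /forallP H.
- by case: (c a).
- apply: chi_min.
  have nC : forall u : del_vert [set v | c v == c a], False.
    move=> u; have := valP u; rewrite inE.
    by rewrite (ord1 (c (val u))) (ord1 (c a)).
  have F : del_vert [set v | c v == c a] -> 'I_0 by move=> u; case: (nC u).
  apply/existsP; exists (finfun F); apply/forallP => u; case: (nC u).
- apply: chi_min.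
  have nC : forall u : del_vert [set v | c v == c a], c a != c (val u).
    move=> u; have := valP u; by rewrite inE eq_sym.
  apply/existsP; exists [ffun u : del_vert [set v | c v == c a] => odflt ord0 (unlift (c a) (c (val u)))].
  apply/forallP => u; apply/forallP => w; apply/implyP => /andP [euw nuw].
  rewrite !ffunE.
  case: (unlift_some (nC u)) => [i Ei ->]; case: (unlift_some (nC w)) => [j Ej ->] /=.
  apply: contra_neq (_ : c (val u) != c (val w)) => [ij|].
    by rewrite Ei Ej ij.
  have := forallP (H (val u)) (val w); rewrite /del_rel in euw; rewrite euw /= val_eqE nuw; done.
Qed.

Local Open Scope ring_scope.

Lemma rearr (c w xn : nat) : (c%:Z + 2%:Z * (c%:Z - w%:Z) - xn%:Z = (c + c + c)%N%:Z - (w + w + xn)%N%:Z)%R.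
Proof. have -> : 2%:Z = (1 + 1)%R by []. rewrite !PoszD mulrDl mul1r !opprD !addrA. by rewrite (addrAC (c%:Z + c%:Z)%R). Qed.

Lemma inM_nat (T : finType) (e : rel T) (xn : nat) y :
  inM e (Posz xn) y =
  ((#|T| + (cl e + cl e) + xn < chi e + chi e + chi e)%N &&
   ((chi e)%:Z - (cl e)%:Z <= y)%R).
Proof.
rewrite /inM /f_gap rearr ltrBrDr -PoszD ltz_nat !addnA; done.
Qed.

Lemma arithL (n n2 b ch ch' w w' xn : nat) (y : int) :
  n2 = (n - b)%N -> (0 < b)%N -> (b <= n)%N -> (ch' <= ch)%N -> (ch <= ch'.+1)%N ->
  (w' <= w)%N -> (w <= w'.+1)%N ->
  (n + (w + w) + xn < ch + ch + ch)%N -> (ch%:Z - w%:Z <= y) ->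
  ~~ ((n2 + (w' + w') + xn < ch' + ch' + ch')%N && (ch'%:Z - w'%:Z <= y)) ->
  (ch'.+1 = ch /\ w' = w) \/ (ch' = ch /\ w'.+1 = w).
Proof.
move=> cB h1 h2 c1 c2 c3 c4 HM1 HM2 nM.
have [ec|ec] : ch' = ch \/ ch'.+1 = ch by nl.
- have [ecl|ecl] : w' = w \/ w'.+1 = w by nl.
  + exfalso; move/negP: nM; apply; apply/andP; split; first by nl.
    by rewrite ec ecl.
  + by right.
- have [ecl|ecl] : w' = w \/ w'.+1 = w by nl.
  + by left.
  + exfalso; move/negP: nM; apply; apply/andP; split; first by nl.
    move: HM2; rewrite -ec -ecl !intS opprD addrACA subrr add0r; done.
Qed.

Lemma keyL (T : finType) (e : rel T) (xn : nat) y (B : {set T}) :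
  simple_graph e -> inM e (Posz xn) y ->
  (forall (T' : finType) (e' : rel T'), simple_graph e' -> inM e' (Posz xn) y ->
     (#|T| <= #|T'|)%N) ->
  B != set0 -> is_independent e B ->
  ((chi (del_rel e B)).+1 = chi e /\ cl (del_rel e B) = cl e) \/
  (chi (del_rel e B) = chi e /\ (cl (del_rel e B)).+1 = cl e).
Proof.
move=> se HM Hmin Bn0 iB.
have h1 : (0 < #|B|)%N by rewrite card_gt0.
have h2 : (#|B| <= #|T|)%N by apply: max_card.
have nM : ~~ inM (del_rel e B) (Posz xn) y.
  apply/negP => H; have := Hmin _ _ (simple_del B se) H; rewrite card_del.
  move: h1 h2; set n := #|T|; set b := #|B| => h1 h2 h3; nl.
rewrite !inM_nat in HM nM; case/andP: HM => HM1 HM2.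
exact: (arithL (card_del B) h1 h2 (chi_val e B) (chi_del_up iB) (cl_val e B)
  (cl_del_up iB) HM1 HM2 nM).
Qed.

Lemma arithC (n n2 ch ch' w w' xn : nat) (y : int) :
  n2 = (n - 2)%N -> (2 <= n)%N -> ch'.+1 = ch -> w' = w ->
  (n + (w + w) + xn < ch + ch + ch)%N -> (ch%:Z - w%:Z <= y) ->
  ~~ ((n2 + (w' + w') + xn < ch' + ch' + ch')%N && (ch'%:Z - w'%:Z <= y)) ->
  n%:Z = ch%:Z + 2%:Z * (ch%:Z - w%:Z) - xn%:Z - 1.
Proof.
move=> cB h2 ec ecl HM1 HM2 nM.
have hy : ch'%:Z - w'%:Z <= y.
  apply: le_trans HM2; rewrite ecl -ec; apply: lerB => //; rewrite lez_nat.
  exact: leqnSn.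
rewrite hy andbT in nM.
have E : (n + 1 + (w + w + xn) = ch + ch + ch)%N.
  move: nM; rewrite -leqNgt => nM; nl.
rewrite rearr -E PoszD addrK PoszD addrK; done.
Qed.

Lemma arithNC (n ch w xn : nat) :
  (n <= w)%N -> (ch <= n)%N -> (n + (w + w) + xn < ch + ch + ch)%N -> False.
Proof. move=> *; nl. Qed.

Lemma colorable_card (T : finType) (e : rel T) : colorable e #|T|.
Proof.
apply/existsP; exists [ffun x => enum_rank x].
apply/forallP => x; apply/forallP => y; apply/implyP => /andP [_ nxy].
by rewrite !ffunE; apply: contra nxy => /eqP /enum_rank_inj ->.
Qed.

Unset Implicit Arguments.

Theorem lemma3p1 (x y : int) (T : finType) (e : rel T) (A : {set T}) :
  0 <= x ->
  simple_graph e ->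
  inM e x y ->
  (forall (T' : finType) (e' : rel T'), simple_graph e' -> inM e' x y ->
     (#|T| <= #|T'|)%N) ->
  A != set0 ->
  is_independent e A ->
  [/\ chi (del_rel e A) = (chi e).-1,
      cl (del_rel e A) = cl e
    & #|T|%:Z = (chi e)%:Z + 2%:Z * f_gap e - x - 1].
Proof.
move=> x0 se HM Hmin An0 indA.
case: x x0 HM Hmin => [xn|xn] // _ HM Hmin.
have hi : irreflexive e by case: se.
have hs : symmetric e by case: se.
have AB : forall B, B != set0 -> is_independent e B ->
    (chi (del_rel e B)).+1 = chi e /\ cl (del_rel e B) = cl e.
  move=> B Bn0 iB.
  case: (keyL se HM Hmin Bn0 iB) => // [[ec ecl]]; exfalso.
  case/set0Pn: Bn0 => a aB.
  have sa : [set a] \subset B by rewrite sub1set.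
  have ha := chi_incl e sa.
  have a0 : [set a] != set0 by apply/set0Pn; exists a; rewrite set11.
  have ia : is_independent e [set a].
    apply/forallP => u; apply/implyP; rewrite inE => /eqP ->.
    apply/forallP => v; apply/implyP; rewrite inE => /eqP ->.
    by rewrite hi.
  case: (keyL se HM Hmin a0 ia) => [[ec2 _]|[_ ecl2]].
    by move: ha; rewrite ec -ec2 ltnn.
  case/existsP: (chi_col e) => c Hc.
  have hc := @chi_class _ e _ c a Hc.
  set C := [set v | c v == c a] in hc.
  have aC : a \in C by rewrite inE.
  have C0 : C != set0 by apply/set0Pn; exists a.
  have iC : is_independent e C.
    apply/forallP => u; apply/implyP; rewrite inE => cu.
    apply/forallP => v; apply/implyP; rewrite inE => cv.
    apply/negP => euv; case: (eqVneq u v) => [uv|nuv].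
      by move: euv; rewrite uv hi.
    have := forallP (forallP Hc u) v; rewrite euv nuv /= (eqP cu) (eqP cv) eqxx.
    done.
  have saC : [set a] \subset C by rewrite sub1set.
  have hcl := cl_incl e saC.
  have ha1 : (0 < chi e)%N by apply: leq_ltn_trans (leq0n _) (ltn_ord (c a)).
  case: (keyL se HM Hmin C0 iC) => [[_ ecl3]|[ec3 _]].
  - by move: hcl; rewrite ecl3 -ecl2 ltnn.
  - move: ha1 hc; rewrite ec3; case: (chi e) => [|k] //= _; by rewrite ltnn.
have [ecA eclA] := AB A An0 indA.
split.
- by rewrite -ecA.
- exact: eclA.
- case: (boolP [exists v, exists w, (v != w) && ~~ e v w]).
  + case/existsP => v /existsP [w /andP [nvw nevw]].
    set B := [set v; w].
    have B0 : B != set0 by apply/set0Pn; exists v; rewrite !inE eqxx.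
    have iB : is_independent e B.
      apply/forallP => u; apply/implyP; rewrite !inE => /orP [] /eqP ->;
      apply/forallP => u'; apply/implyP; rewrite !inE => /orP [] /eqP ->;
      by rewrite ?hi // hs.
    have [ecB eclB] := AB B B0 iB.
    have h2 : (2 <= #|T|)%N by have := max_card B; rewrite /B cards2 nvw.
    have cB : #|del_vert B| = (#|T| - 2)%N by rewrite card_del cards2 nvw.
    have nM : ~~ inM (del_rel e B) (Posz xn) y.
      apply/negP => H; have := Hmin _ _ (simple_del B se) H; rewrite cB.
      move: h2; set n := #|T| => h2 h3; nl.
    rewrite !inM_nat in HM nM; case/andP: HM => HM1 HM2.
    rewrite /f_gap; exact: (arithC cB h2 ecB eclB HM1 HM2 nM).
  + move=> hne; exfalso.
    have Hall : forall u v, u != v -> e u v.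
      move=> u v nuv; apply/negPn/negP => neuv; move/negP: hne; apply.
      by apply/existsP; exists u; apply/existsP; exists v; rewrite nuv neuv.
    have hcl : (#|[set: T]| <= cl e)%N.
      apply: cl_max; apply/forallP => u; apply/implyP => _.
      apply/forallP => v; apply/implyP => _; apply/implyP; exact: Hall.
    rewrite cardsT in hcl.
    have hch : (chi e <= #|T|)%N by apply: chi_min; exact: colorable_card.
    rewrite inM_nat in HM; case/andP: HM => HM1 _.
    exact: (arithNC hcl hch HM1).
Qed.
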